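(* Let $G$ be a connected graph. Then $G$ is a core if and only if there exists a (possibly infinite) graph $H$ such that $G\to H$ and every homomorphism from $G$ to $H$ is locally injective.
   Context: A homomorphism $G\to H$ is an adjacency-preserving map $V(G)\to V(H)$; $G\to H$ means one exists. A homomorphism $\varphi$ is locally injective if $\varphi(u)\ne\varphi(v)$ for any two distinct vertices $u,v$ having a common neighbor. $G$ is a core if every homomorphism $G\to G$ is an automorphism. *)

(* Defs.v *)
(* A finite simple graph G is a finType V with a symmetric,
   irreflexive boolean relation e. A possibly infinite graph H is a Type with a
   symmetric irreflexive Prop-valued adjacency relation. *)
From mathcomp Require Import all_boot.
Set Implicit Arguments. Unset Strict Implicit. Unset Printing Implicit Defensive.

Definition connected_graph (V : finType) (e : rel V) : Prop :=
  forall x y : V, connect e x y.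

Definition is_hom (V : finType) (e : rel V) (H : Type) (adj : H -> H -> Prop)
  (f : V -> H) : Prop :=
  forall u v : V, e u v -> adj (f u) (f v).

Definition locally_injective (V : finType) (e : rel V) (H : Type) (f : V -> H) : Prop :=
  forall u v w : V, e w u -> e w v -> u <> v -> f u <> f v.

Definition is_automorphism (V : finType) (e : rel V) (f : V -> V) : Prop :=
  bijective f /\ forall u v : V, e (f u) (f v) = e u v.

Definition is_core (V : finType) (e : rel V) : Prop :=
  forall f : V -> V, is_hom e (fun x y => e x y) f -> is_automorphism e f.

(* Main.v *)
Require Import Defs.
From mathcomp Require Import all_boot.
From Stdlib Require Import Classical Lia.
From mathcomp Require Import zify.

Lemma iter_idem (T : finType) (f : T -> T) :
  exists n, 0 < n /\ forall x, iter n f (iter n f x) = iter n f x.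
Proof.
set N := #|{ffun T -> T}|.
pose F := fun k : 'I_N.+1 => [ffun x => iter k f x].
have : ~ injective F.
  move=> /leq_card; rewrite card_ord -/N; by rewrite ltnn.
move=> H1; have [i H2] := not_all_ex_not _ _ H1.
have [j H3] := not_all_ex_not _ _ H2.
have [Fij nij] := imply_to_and _ _ H3.
have [i' [j' [lt Fij']]] : exists i' j' : nat, i' < j' /\ forall x, iter i' f x = iter j' f x.
  case: (ltngtP i j) => h.
  - exists i, j; split => // x; by move: Fij => /ffunP /(_ x); rewrite !ffunE.
  - exists j, i; split => // x; by move: Fij => /ffunP /(_ x); rewrite !ffunE.
  - by case: nij; apply: val_inj.
set p := j' - i'.
have pp : 0 < p by rewrite subn_gt0.
have step : forall a x, i' <= a -> iter (a + p) f x = iter a f x.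
  move=> a x ha.
  have -> : a + p = (a - i') + j' by rewrite /p; lia.
  rewrite iterD -Fij' -iterD; congr iter; lia.
have many : forall t a x, i' <= a -> iter (a + p * t) f x = iter a f x.
  elim=> [|t IH] a x ha; first by rewrite muln0 addn0.
  have -> : a + p * t.+1 = (a + p * t) + p by rewrite mulnS; lia.
  rewrite step; [exact: IH| lia].
exists (p * i'.+1); split; first by rewrite muln_gt0 pp.
move=> x; rewrite -iterD many //.
nia.
Qed.

Lemma iter_hom (V : finType) (e : rel V) (f : V -> V) n :
  is_hom e (fun x y => e x y) f -> is_hom e (fun x y => e x y) (iter n f).
Proof.
move=> hf; elim: n => [|n IH] u v h //=.
exact: hf (IH _ _ h).
Qed.

Lemma iter_li (V : finType) (e : rel V) (f : V -> V) n :
  is_hom e (fun x y => e x y) f -> locally_injective e f ->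
  locally_injective e (iter n f).
Proof.
move=> hf lf; elim: n => [|n IH] u v w h1 h2 nuv //.
rewrite !iterSr.
exact: IH (f u) (f v) (f w) (hf _ _ h1) (hf _ _ h2) (lf _ _ _ h1 h2 nuv).
Qed.

Lemma retract_id (V : finType) (e : rel V) (r : V -> V) :
  connected_graph e -> is_hom e (fun x y => e x y) r -> locally_injective e r ->
  (forall x, r (r x) = r x) -> forall x, r x = x.
Proof.
move=> conn hr lr idr y.
have : connect e (r y) y by apply: conn.
move=> /connectP [pth pp ->].
have : r (r y) = r y by [].
move: (r y) pp => x0.
elim: pth x0 => [|z pth IH] x0 /=.
  by move=> _ ->.
move=> /andP [ex0z pz] fx0.
apply: (IH z) => //.
case: (eqVneq (r z) z) => // nz.
exfalso.
have h1 : e x0 (r z) by rewrite -{1}fx0; apply: hr.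
have nz' : z <> r z by move=> E; rewrite -E eqxx in nz.
have := lr z (r z) x0 ex0z h1 nz'.
by rewrite idr.
Qed.

Theorem lemma4p2 (V : finType) (e : rel V) :
  symmetric e -> irreflexive e -> connected_graph e ->
  (is_core e <->
   exists (H : Type) (adj : H -> H -> Prop),
     (forall x y : H, adj x y -> adj y x) /\
     (forall x : H, ~ adj x x) /\
     (exists f : V -> H, is_hom e adj f) /\
     (forall f : V -> H, is_hom e adj f -> locally_injective e f)).
Proof.
move=> sym irr conn; split.
- move=> core.
  exists V, (fun x y => e x y); split.
    by move=> x y; rewrite sym.
  split; first by move=> x; rewrite irr.
  split; first by exists id.
  move=> f hf u v w _ _ nuv E.
  have [[g fg gf] _] := core f hf.
  by apply: nuv; rewrite -(fg u) -(fg v) E.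
- move=> [H [adj [_ [_ [[g hg] li]]]]] f hf.
  have lf : locally_injective e f.
    move=> u v w h1 h2 nuv E.
    apply: (li (fun x => g (f x))) h1 h2 nuv _; last by rewrite E.
    by move=> a b hab; apply: hg; apply: hf.
  have [n [n0 idn]] := @iter_idem _ f.
  have idr := @retract_id _ _ _ conn (@iter_hom _ _ _ n hf) (@iter_li _ _ _ n hf lf) idn.
  have K1 : cancel f (iter n.-1 f).
    by move=> x; rewrite -iterSr prednK.
  have K2 : cancel (iter n.-1 f) f.
    by move=> x; rewrite -iterS prednK.
  split; first by exists (iter n.-1 f).
  move=> u v; apply/idP/idP; last by apply: hf.
  move=> h; have := @iter_hom _ _ _ n.-1 hf _ _ h.
  by rewrite !K1.
Qed.
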